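(* For integers $d\ge 0$ and $n\ge 0$, let $F_{d,n}=E_\infty(\mu_{d,n})$, where $\mu_{d,n}=\sum_{i=1}^n\delta_{v_{j(i)}}$ for an orthonormal basis $v_1,\dots,v_{d+1}$ of $\mathbf{R}^{d+1}$ and $j(i)\in\{1,\dots,d+1\}$ with $j(i)\equiv i\pmod{d+1}$ (so $F_{d,n}$ equals the number of pairs $1\le i<i'\le n$ with $i\not\equiv i'\pmod{d+1}$). For integers $d\ge1$ and $0\le k\le n$, let $F_{d,n,k}=E_\infty(\nu_{d,n,k})$, where, for a unit vector $p\in\mathbf{R}^{d+1}$ and an orthonormal basis $w_1,\dots,w_d$ of $V=p^\perp$, $\nu_{d,n,k}=(n-k)\delta_p+\sum_{i=1}^k\delta_{w_{j(i)}}$ with $j(i)\in\{1,\dots,d\}$ and $j(i)\equiv i\pmod d$. If $n-1\ge d\ge1$ and $\frac{dn}{d+1}\le k\le n-1$, then $$F_{d,n-k}+F_{d-1,n}<F_{d,n,k},\qquad F_{d,n,k}>F_{d,n,k+1},$$ and moreover $F_{d,n,\lfloor dn/(d+1)\rfloor}=F_{d,n,\lceil dn/(d+1)\rceil}$.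
   Context: Define $\Lambda^\infty(x,y)=1$ if $x\cdot y=0$ and $0$ otherwise, for unit vectors $x,y$, and for a finite nonnegative measure $\mu$ on the unit sphere, $E_\infty(\mu)=\frac12\iint\Lambda^\infty(x,y)\,d\mu(x)\,d\mu(y)$; for $\mu=\sum_i\delta_{x_i}$ this is the number of unordered pairs of indices $\{i,i'\}$ with $x_i\cdot x_{i'}=0$. The quantities $F_{d,n}$ and $F_{d,n,k}$ do not depend on the choice of bases, $p$, by rotation invariance. *)

(* Defs.v *)
From mathcomp Require Import all_boot all_order all_algebra.
From mathcomp Require Import reals.
Set Implicit Arguments. Unset Strict Implicit. Unset Printing Implicit Defensive.
Import Order.TTheory GRing.Theory Num.Theory.
Local Open Scope ring_scope.

Definition dotv (R : realType) (m : nat) (x y : 'rV[R]_m) : R :=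
  \sum_(j < m) x 0 j * y 0 j.

(* E_infty of the atomic measure mu = sum_i delta_{pts_i}:
   number of unordered pairs of indices {i,i'} (i < i') with pts_i . pts_i' = 0. *)
Definition Einf (R : realType) (m : nat) (pts : seq 'rV[R]_m) : nat :=
  #|[set ij : 'I_(size pts) * 'I_(size pts) |
       (ij.1 < ij.2)%N && (dotv (nth 0 pts ij.1) (nth 0 pts ij.2) == 0)]|.

Definition ebasis (R : realType) (m : nat) (j : 'I_m) : 'rV[R]_m := delta_mx 0 j.

(* mu_{d,n} = sum_{i=1}^n delta_{v_{j(i)}}, with v = standard basis of R^{d+1},
   v index taken as i mod (d+1) (a relabelling of j(i) in {1..d+1}). *)
Definition mu_pts (R : realType) (d n : nat) : seq 'rV[R]_(d.+1) :=
  [seq ebasis R (inord (i %% d.+1)) | i <- iota 1 n].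

Definition F (R : realType) (d n : nat) : nat := Einf (mu_pts R d n).

(* nu_{d,n,k} = (n-k) delta_p + sum_{i=1}^k delta_{w_{j(i)}} in R^{d+1},
   with p = e_0 and w_1..w_d = e_1..e_d (orthonormal basis of p^perp),
   w index taken as 1 + (i mod d). *)
Definition nu_pts (R : realType) (d n k : nat) : seq 'rV[R]_(d.+1) :=
  nseq (n - k) (ebasis R ord0) ++
  [seq ebasis R (inord (i %% d).+1) | i <- iota 1 k].

Definition Fk (R : realType) (d n k : nat) : nat := Einf (nu_pts R d n k).

(* Main.v *)
Require Import Defs.
From mathcomp Require Import all_boot all_order all_algebra.
From mathcomp Require Import reals.
From mathcomp Require Import zify.
Set Implicit Arguments. Unset Strict Implicit. Unset Printing Implicit Defensive.
Import Order.TTheory GRing.Theory Num.Theory.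

Section Aux.
Variable R : realType.

Lemma Einf_sum m (pts : seq 'rV[R]_m) :
  Einf pts = (\sum_(j < size pts) \sum_(i < j)
     (dotv (nth 0%R pts i) (nth 0%R pts j) == 0%R))%N.
Proof.
set Q := fun i j : nat => (dotv (nth 0%R pts i) (nth 0%R pts j) == 0%R).
rewrite /Einf -sum1_card big_mkcond /=.
transitivity (\sum_(i < size pts) \sum_(j < size pts)
   (fun (i j : 'I_(size pts)) => nat_of_bool ((i < j)%N && Q i j)) i j)%N.
  rewrite pair_big /=; apply: eq_bigr => p _; rewrite inE /Q; by case: ifP.
rewrite exchange_big /=; apply: eq_bigr => j _.
rewrite (big_ord_widen_cond (size pts) xpredT (fun i => nat_of_bool (Q i j))); last exact: ltnW.
rewrite [RHS]big_mkcond /=; apply: eq_bigr => i _.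
by case: (i < j)%N; case: (Q i j).
Qed.


Lemma dot_e0 m (a b : 'I_m) :
  (dotv (ebasis R a) (ebasis R b) == 0%R) = (a != b).
Proof.
have -> : dotv (ebasis R a) (ebasis R b) = ((a == b)%:R)%R.
  rewrite /dotv /ebasis (bigD1 a) //= big1 => [|k /negbTE ka]; last first.
    by rewrite !mxE ka andbF mul0r.
  by rewrite !mxE !eqxx /= mul1r addr0.
by case: (a == b); rewrite ?oner_eq0 ?eqxx.
Qed.

Lemma F_le c m : (F R c m <= \sum_(j < m) j)%N.
Proof.
rewrite /F Einf_sum size_map size_iota; apply: leq_sum => j _.
apply: (@leq_trans (\sum_(i < j) 1)%N); first by apply: leq_sum => i _; exact: leq_b1.
by rewrite sum_nat_const card_ord muln1.
Qed.

Lemma inord_eq n (x y : nat) : (x < n.+1)%N -> (y < n.+1)%N ->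
  (inord x == inord y :> 'I_n.+1) = (x == y).
Proof. by move=> hx hy; rewrite -val_eqE /= !inordK. Qed.

Lemma mu_formula c m : F R c m =
  (\sum_(j < m) \sum_(i < j) ((i.+1 %% c.+1) != (j.+1 %% c.+1)))%N.
Proof.
rewrite /F Einf_sum size_map size_iota; apply: eq_bigr => j _; apply: eq_bigr => i _.
have hi : (i < m)%N by apply: ltn_trans (ltn_ord i) (ltn_ord j).
rewrite /mu_pts !(nth_map 0%N) ?size_iota // !nth_iota // dot_e0.
by rewrite inord_eq ?ltn_pmod // !add1n.
Qed.

Lemma cnt_eq d j r : (0 < d)%N ->
  (\sum_(i < j) ((i + r) %% d == (j + r) %% d))%N = j %/ d.
Proof.
move=> d0; elim: j r => [|j IH] r; first by rewrite big_ord0 div0n.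
rewrite big_ord_recl /=.
have -> : (\sum_(i < j) ((bump 0 i + r) %% d == (j.+1 + r) %% d))%N
        = (\sum_(i < j) ((i + r.+1) %% d == (j + r.+1) %% d))%N.
  by apply: eq_bigr => i _; rewrite /bump /= add1n !addnS.
rewrite IH divnS //.
by rewrite -{1}(add0n r) eqn_modDr mod0n eq_sym.
Qed.

Lemma a_eq d j : (0 < d)%N ->
  (\sum_(i < j) ((i.+1) %% d != (j.+1) %% d))%N = j - j %/ d.
Proof.
move=> d0.
have := cnt_eq j 1 d0.
have : (\sum_(i < j) ((i.+1) %% d != (j.+1) %% d) + \sum_(i < j) ((i + 1) %% d == (j + 1) %% d))%N = j.
  rewrite -big_split /=.
  rewrite (eq_bigr (fun _ => 1%N)); first by rewrite sum_nat_const card_ord muln1.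
  by move=> i _; rewrite !addn1; case: (_ == _).
lia.
Qed.

Lemma nu_formula d n k : (0 < d)%N ->
  Fk R d n k = ((n - k) * k + \sum_(j < k) (j - j %/ d))%N.
Proof.
move=> d0.
rewrite /Fk Einf_sum /nu_pts size_cat size_nseq size_map size_iota big_split_ord /=.
rewrite big1 ?add0n; last first.
  move=> j _; apply: big1 => i _.
  have hi : (i < n - k)%N by apply: ltn_trans (ltn_ord i) (ltn_ord j).
  by rewrite !nth_cat size_nseq hi ltn_ord !nth_nseq hi ltn_ord dot_e0 eqxx.
have -> : ((n - k) * k = \sum_(j < k) (n - k))%N by rewrite sum_nat_const card_ord mulnC.
rewrite -big_split /=.
apply: eq_bigr => t _.
rewrite big_split_ord /= -(a_eq t d0).
congr addn.
  rewrite (eq_bigr (fun _ => 1%N)); first by rewrite sum_nat_const card_ord muln1.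
  move=> i _; rewrite !nth_cat size_nseq ltn_ord ltnNge leq_addr /= nth_nseq ltn_ord.
  rewrite addKn (nth_map 0%N) ?size_iota // nth_iota // dot_e0.
  by rewrite -val_eqE /= inordK // ltnS ltn_pmod.
apply: eq_bigr => i _.
rewrite !nth_cat size_nseq !ltnNge !leq_addr /= !addKn.
rewrite !(nth_map 0%N) ?size_iota ?(ltn_trans (ltn_ord i)) // !nth_iota ?(ltn_trans (ltn_ord i)) //.
rewrite dot_e0 inord_eq ?ltnS ?ltn_pmod // !add1n.
Qed.

End Aux.

Theorem lemma2p3 (R : realType) (d n : nat) :
  (1 <= d)%N -> (d <= n - 1)%N ->
  (forall k : nat, (d * n <= d.+1 * k)%N -> (k <= n - 1)%N ->
     (F R d (n - k) + F R (d - 1) n < Fk R d n k)%N /\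
     (Fk R d n (k + 1) < Fk R d n k)%N) /\
  Fk R d n ((d * n) %/ d.+1) = Fk R d n ((d * n + d) %/ d.+1).
Proof.
move=> d0 hdn.
have hd : (d - 1).+1 = d by lia.
have Fd1 : F R (d - 1) n = (\sum_(j < n) (j - j %/ d))%N.
  by rewrite mu_formula hd; apply: eq_bigr => j _; exact: a_eq.
split.
  move=> k h1 h2.
  set m := n - k.
  have hn : n = (k + m)%N by rewrite /m; lia.
  have m1 : (1 <= m)%N by rewrite /m; lia.
  have hk : (d * m <= k)%N by move: h1; rewrite hn; nia.
  split.
    rewrite Fd1 !nu_formula // -/m.
    have hs : (\sum_(j < n) (j - j %/ d) = \sum_(j < k) (j - j %/ d)
                + \sum_(t < m) ((k + t) - (k + t) %/ d))%N.
      by rewrite hn big_split_ord.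
    rewrite hs.
    have hF := F_le R d m.
    have hr : (\sum_(j < m) j = \sum_(t < m) (m - t.+1))%N.
      by rewrite (reindex_inj rev_ord_inj) /=.
    rewrite hr in hF.
    have hb : (\sum_(t < m) (m - t.+1) + \sum_(t < m) ((k + t) - (k + t) %/ d)
               <= \sum_(t < m) (k - 1))%N.
      rewrite -big_split /=; apply: leq_sum => t _.
      have q1 : (m <= (k + t) %/ d)%N by rewrite leq_divRL //; lia.
      have q2 : ((k + t) %/ d <= k + t)%N by apply: leq_div.
      have := ltn_ord t; lia.
    rewrite sum_nat_const card_ord in hb.
    have k1 : (0 < k)%N by apply: leq_trans hk; rewrite muln_gt0 d0 m1.
    have : (m * (k - 1) < m * k)%N by rewrite ltn_pmul2l //; lia.
    lia.
  rewrite !nu_formula // addn1 big_ord_recr /=.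
  have q1 : (m <= k %/ d)%N by rewrite leq_divRL //; lia.
  have q2 : (k %/ d <= k)%N by apply: leq_div.
  move: q1 q2; set q := k %/ d; set S := (\sum_(i < k) _)%N.
  have -> : (n - k.+1 = m - 1)%N by rewrite /m; lia.
  rewrite -/m; set m' := (m - 1)%N; have hm : m = m'.+1 by rewrite /m'; lia.
  rewrite hm mulnS mulSn => q1 q2.
  lia.
have hdv := divn_eq (d * n) d.+1.
have hrl := @ltn_pmod (d * n) d.+1 isT.
move: hdv hrl; set q := (d * n) %/ d.+1; set r := (d * n) %% d.+1 => hdv hrl.
case: (posnP r) => r0.
  have -> : ((d * n + d) %/ d.+1 = q)%N.
    by rewrite hdv r0 addn0 divnMDl // divn_small // addn0.
  by [].
have -> : ((d * n + d) %/ d.+1 = q.+1)%N.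
  have -> : (d * n + d = q.+1 * d.+1 + (r - 1))%N by rewrite hdv; lia.
  by rewrite divnMDl // divn_small ?addn0 //; lia.
have hq : (q.+1 <= n)%N.
  rewrite ltnNge; apply/negP => hnq.
  have : (d * n <= q * d.+1)%N by rewrite mulnC; exact: leq_mul hnq (leqnSn d).
  lia.
set m := n - q.+1.
have hn : n = (q.+1 + m)%N by rewrite /m; lia.
have Hq : q = (m * d + (d - r))%N.
  move: hdv; rewrite hn mulnDr !mulnS [d * q]mulnC [d * m]mulnC; lia.
have hmq : (m <= q)%N.
  have : (m <= m * d)%N by rewrite leq_pmulr.
  lia.
have hs : (q %/ d = m)%N by rewrite {1}Hq divnMDl // divn_small ?addn0 //; lia.
rewrite !nu_formula // big_ord_recr /= hs.
set S := (\sum_(i < q) _)%N.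
have -> : (n - q = m.+1)%N by rewrite /m; lia.
rewrite -/m mulnS mulSn.
lia.
Qed.
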